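(* For each $j=0,\dots,4$, every isometry of the $\mathbb{Z}$-lattice $\Lambda_j$ is induced by an ($\mathcal{E}$-linear) isometry of $\Lambda$.
   Context: Let $\omega=e^{2\pi i/3}$, $\mathcal{E}=\mathbb{Z}[\omega]$, $\theta=\sqrt{-3}$. Let $\Lambda=\mathcal{E}^5$ with Hermitian form $h(x,y)=-x_0\bar y_0+x_1\bar y_1+\dots+x_4\bar y_4$. For $j=0,\dots,4$ let $\xi_j$ be the antilinear map $(x_0,\dots,x_4)\mapsto(\bar x_0,\dots,\bar x_{4-j},-\bar x_{5-j},\dots,-\bar x_4)$, and let $\Lambda_j=\Lambda^{\xi_j}$ be the $\mathbb{Z}$-lattice of $\xi_j$-fixed vectors, i.e. $\Lambda_j=\mathbb{Z}^{5-j}\oplus\theta\mathbb{Z}^j\subset\mathcal{E}^5$, equipped with the restriction of $h$ (which is real- and integer-valued on it). *)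

(* Defs.v *)
(* the Eisenstein integers are realised inside algC. *)
From HB Require Import structures.
From mathcomp Require Import all_boot all_order all_algebra all_field.
Set Implicit Arguments. Unset Strict Implicit. Unset Printing Implicit Defensive.
Import Order.TTheory GRing.Theory Num.Theory.
Local Open Scope ring_scope.

(* omega = e^{2 pi i/3} = (-1 + i sqrt 3)/2 *)
Definition omega : algC := (-1 + 'i * sqrtC 3) / 2.
Definition theta : algC := 'i * sqrtC 3.

Definition inE (z : algC) : Prop :=
  exists a b : int, z = a%:~R + b%:~R * omega.

Definition vec := 'cV[algC]_5.

Definition inLambda (x : vec) : Prop := forall k : 'I_5, inE (x k 0).

Definition hsign (k : 'I_5) : algC := if val k == 0%N then -1 else 1.
Definition h (x y : vec) : algC :=
  \sum_(k < 5) hsign k * x k 0 * (y k 0)^*.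

Definition xi (j : nat) (x : vec) : vec :=
  \col_(k < 5) (if (val k < 5 - j)%N then (x k 0)^* else - (x k 0)^*).

Definition inLambdaj (j : nat) (x : vec) : Prop := inLambda x /\ xi j x = x.

(* Isometry of the Z-lattice Lambda_j: a Z-linear (i.e. additive) bijection
   Lambda_j -> Lambda_j preserving (the restriction of) h.  Only the values of
   g on Lambda_j matter. *)
Definition isometry_Lambdaj (j : nat) (g : vec -> vec) : Prop :=
  [/\ (forall x y, inLambdaj j x -> inLambdaj j y -> g (x + y) = g x + g y),
      (forall x, inLambdaj j x -> inLambdaj j (g x)),
      (exists g' : vec -> vec,
          (forall x, inLambdaj j x -> inLambdaj j (g' x)) /\
          (forall x, inLambdaj j x -> g' (g x) = x /\ g (g' x) = x)) &
      (forall x y, inLambdaj j x -> inLambdaj j y -> h (g x) (g y) = h x y)].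

(* E-linear isometry of Lambda = E^5: an automorphism of the E-module E^5,
   i.e. a matrix with entries in E with an inverse with entries in E,
   preserving h on Lambda. *)
Definition isometry_Lambda (G : 'M[algC]_5) : Prop :=
  [/\ (forall i k, inE (G i k)),
      (exists G' : 'M[algC]_5,
          [/\ forall i k, inE (G' i k), G *m G' = 1%:M & G' *m G = 1%:M]) &
      (forall x y, inLambda x -> inLambda y -> h (G *m x) (G *m y) = h x y)].

(* Main.v *)
Require Import Defs.
From mathcomp Require Import all_boot all_order all_algebra all_field.
From mathcomp Require Import ring.
Set Implicit Arguments. Unset Strict Implicit. Unset Printing Implicit Defensive.
Import Order.TTheory GRing.Theory Num.Theory.
Local Open Scope ring_scope.

Lemma theta_conj : theta^* = - theta.
Proof.
rewrite /theta rmorphM /= (conjCi algC) geC0_conj ?sqrtC_ge0 ?ler0n //.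
by rewrite mulNr.
Qed.

Lemma theta_sq : theta * theta = - 3.
Proof.
rewrite /theta mulrACA -!expr2 sqrCi sqrtCK; by rewrite mulN1r.
Qed.

Lemma theta_neq0 : theta != 0.
Proof.
apply/eqP => H; have := theta_sq; rewrite H mulr0 => /eqP; rewrite eq_sym oppr_eq0.
by rewrite pnatr_eq0.
Qed.

Lemma theta_omega : theta = 1 + 2%:R * omega.
Proof. rewrite /omega mulrC divfK ?pnatr_eq0 //; rewrite /theta; ring. Qed.

Lemma inE_ab (a b : int) : Defs.inE (a%:~R + b%:~R * theta).
Proof.
exists (a + b)%R, (2 * b)%R; rewrite theta_omega !rmorphD /= !rmorphM /=.
rewrite -[2%:~R]/((2%:R : algC)) ; ring.
Qed.


Lemma inE_int (a : int) : Defs.inE a%:~R.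
Proof. have := inE_ab a 0; by rewrite mulr0z mul0r addr0. Qed.

Lemma inE_th (a : int) : Defs.inE (a%:~R * theta).
Proof. have := inE_ab 0 a; by rewrite mulr0z add0r. Qed.

Lemma omega_th : omega = (-1 + theta) / 2%:R.
Proof. by []. Qed.

Lemma two_neq0 : (2%:R : algC) != 0.
Proof. by rewrite pnatr_eq0. Qed.

Lemma omega_conj : omega^* = (-1 - theta) / 2%:R.
Proof.
rewrite omega_th rmorphM /= fmorphV /= rmorphD /= rmorphN /= rmorph1 conjC_nat.
rewrite -/theta theta_conj //.
Qed.

Lemma E_real z : Defs.inE z -> z^* = z -> exists a : int, z = a%:~R.
Proof.
move=> [a [b ->]] H; exists a.
have : b%:~R * theta = 0.
  move: H; rewrite rmorphD rmorphM /= !rmorph_int omega_conj omega_th => /eqP.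
  rewrite -subr_eq0 => /eqP H; rewrite -[0]oppr0 -H.
  by field.
move/eqP; rewrite mulf_eq0 (negbTE theta_neq0) orbF intr_eq0 => /eqP ->.
by rewrite mul0r addr0.
Qed.

Lemma E_imag z : Defs.inE z -> - z^* = z -> exists a : int, z = a%:~R * theta.
Proof.
move=> [a [b ->]] H; exists a.
have : (2 * a - b)%:~R = 0 :> algC.
  move: H; rewrite rmorphD rmorphM /= !rmorph_int omega_conj omega_th => /eqP.
  rewrite -subr_eq0 => /eqP H; rewrite rmorphB /= rmorphM /= -[0]oppr0 -H.
  by field.
move/eqP; rewrite intr_eq0 subr_eq0 => /eqP <-.
rewrite omega_th rmorphM /= (_ : 2%:~R = 2%:R :> algC) //; by field.
Qed.

Definition cc (j : nat) (k : 'I_5) : algC := if (val k < 5 - j)%N then 1 else theta.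
Definition ff (j : nat) (k : 'I_5) : vec := \col_(i < 5) (if i == k then cc j k else 0).

Lemma cc_neq0 j k : cc j k != 0.
Proof. rewrite /cc; case: ifP => _; [exact: oner_neq0 | exact: theta_neq0]. Qed.

Lemma Lj_char j x : inLambdaj j x <-> forall k, exists a : int, x k 0 = a%:~R * cc j k.
Proof.
split.
  move=> [HL Hx] k; have := congr1 (fun M : vec => M k 0) Hx; rewrite /= /xi mxE /cc.
  case: ifP => _ H.
    have [a ->] := E_real (HL k) H; by exists a; rewrite mulr1.
  exact: E_imag (HL k) H.
move=> H; split.
  move=> k; have [a ->] := H k; rewrite /cc; case: ifP => _.
    have := inE_ab a 0; by rewrite mul0r addr0 mulr1.
  have := inE_ab 0 a; by rewrite add0r.
apply/matrixP => k l; rewrite (ord1 l) /xi mxE; have [a ->] := H k.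
rewrite rmorphM /= rmorph_int /cc; case: ifP => Hk; rewrite Hk.
  by rewrite conjC1.
by rewrite theta_conj mulrN opprK.
Qed.

Lemma ff_Lj j k : inLambdaj j (ff j k).
Proof.
apply/Lj_char => i; exists (i == k)%:R; rewrite mxE.
case: eqP => [->|_]; by rewrite ?mul1r ?mul0r.
Qed.

Lemma Lj_add j x y : inLambdaj j x -> inLambdaj j y -> inLambdaj j (x + y).
Proof.
move=> /Lj_char Hx /Lj_char Hy; apply/Lj_char => k.
have [a Ha] := Hx k; have [b Hb] := Hy k; exists (a + b); by rewrite mxE Ha Hb rmorphD mulrDl.
Qed.

Lemma Lj_opp j x : inLambdaj j x -> inLambdaj j (- x).
Proof.
move=> /Lj_char Hx; apply/Lj_char => k.
have [a Ha] := Hx k; exists (- a); by rewrite mxE Ha rmorphN mulNr.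
Qed.

Lemma Lj_0 j : inLambdaj j 0.
Proof. apply/Lj_char => k; exists 0; by rewrite mxE mul0r. Qed.

Lemma Lj_scale j x (a : int) : inLambdaj j x -> inLambdaj j (a%:~R *: x).
Proof.
move=> /Lj_char Hx; apply/Lj_char => k.
have [b Hb] := Hx k; exists (a * b); by rewrite mxE Hb rmorphM mulrA.
Qed.

Lemma h_ffr j x l : h x (ff j l) = hsign l * x l 0 * (cc j l)^*.
Proof.
rewrite /h (bigD1 l) //= big1 ?addr0; first by rewrite mxE eqxx.
by move=> i /negbTE Hi; rewrite mxE Hi rmorph0 mulr0.
Qed.

Lemma h_ffl j k y : h (ff j k) y = hsign k * cc j k * (y k 0)^*.
Proof.
rewrite /h (bigD1 k) //= big1 ?addr0; first by rewrite mxE eqxx.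
by move=> i /negbTE Hi; rewrite mxE Hi mulr0 mul0r.
Qed.

Lemma vec_decomp j (x : vec) : x = \sum_k (x k 0 / cc j k) *: ff j k.
Proof.
apply/matrixP => i l; rewrite (ord1 l) summxE (bigD1 i) //= big1 ?addr0.
  by rewrite !mxE eqxx divfK // cc_neq0.
by move=> k /negbTE Hk; rewrite !mxE eq_sym Hk mulr0.
Qed.

Lemma h_sum (a b : 'I_5 -> algC) (u v : 'I_5 -> vec) :
  h (\sum_k a k *: u k) (\sum_l b l *: v l) =
  \sum_k \sum_l a k * (b l)^* * h (u k) (v l).
Proof.
rewrite /h.
under eq_bigr => i _ do rewrite !summxE rmorph_sum mulr_sumr mulr_sumr.
under eq_bigr => i _ do under eq_bigr => l _ do rewrite mulr_suml.
under [RHS]eq_bigr => k _ do under eq_bigr => l _ do rewrite mulr_sumr.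
rewrite exchange_big /=.
under eq_bigr => l _ do rewrite exchange_big /=.
rewrite exchange_big /=; apply: eq_bigr => k _; apply: eq_bigr => l _.
apply: eq_bigr => i _; rewrite !mxE rmorphM /=; ring.
Qed.

Lemma hsign_sq k : hsign k * hsign k = 1.
Proof. rewrite /hsign; case: ifP => _; by rewrite ?mulrNN mul1r. Qed.

Lemma construct j (hj : (j <= 4)%N) (g g' : vec -> vec) :
  (forall x y, inLambdaj j x -> inLambdaj j y -> g (x + y) = g x + g y) ->
  (forall x, inLambdaj j x -> inLambdaj j (g x)) ->
  (forall x, inLambdaj j x -> inLambdaj j (g' x)) ->
  (forall x, inLambdaj j x -> g (g' x) = x) ->
  (forall x y, inLambdaj j x -> inLambdaj j y -> h (g x) (g y) = h x y) ->
  exists G : 'M[algC]_5,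
    [/\ (forall i k, Defs.inE (G i k)),
        (forall x, inLambdaj j x -> G *m x = g x) &
        (forall x y, h (G *m x) (G *m y) = h x y)].
Proof.
move=> Hadd Hmap Hmap' Hinv Hh.
pose G := \matrix_(i < 5, k < 5) (g (ff j k) i 0 / cc j k).
have HGf k : G *m ff j k = g (ff j k).
  apply/matrixP => i l; rewrite (ord1 l) mxE (bigD1 k) //= big1 ?addr0.
    by rewrite !mxE eqxx divfK // cc_neq0.
  by move=> k' /negbTE Hk; rewrite !mxE Hk mulr0.
have g0 : g 0 = 0.
  have := Hadd 0 0 (Lj_0 j) (Lj_0 j); rewrite addr0 => /(congr1 (fun z => z - g 0)).
  by rewrite addrK subrr.

pose Q x := inLambdaj j x /\ G *m x = g x.
have Q0 : Q 0 by split; [exact: Lj_0 | rewrite mulmx0 g0].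
have QD x y : Q x -> Q y -> Q (x + y).
  move=> [Hx Ex] [Hy Ey]; split; first exact: Lj_add.
  by rewrite mulmxDr Ex Ey Hadd.
have QN x : Q x -> Q (- x).
  move=> [Hx Ex]; split; first exact: Lj_opp.
  have := Hadd x (- x) Hx (Lj_opp Hx); rewrite subrr g0 => /eqP.
  rewrite eq_sym addrC addr_eq0 => /eqP ->; by rewrite mulmxN Ex.
have Qf k : Q (ff j k) by split; [exact: ff_Lj | exact: HGf].
have QZ x (a : int) : Q x -> Q (a%:~R *: x).
  move=> Qx; rewrite scaler_int.
  have QN' n : Q (x *+ n).
    elim: n => [|n IH]; first by rewrite mulr0n.
    by rewrite mulrS; apply: QD.
  case: a => n; first exact: QN'.
  rewrite NegzE mulrNz; apply: QN; exact: QN'.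
have HG x : inLambdaj j x -> G *m x = g x.
  move=> Hx; have Hc := proj1 (Lj_char j x) Hx.
  suff [] : Q x by [].
  rewrite (vec_decomp j x); apply: big_ind => //.
  move=> k _; have [a ->] := Hc k; rewrite mulfK ?cc_neq0 //; exact: QZ.
exists G; split => //; last first.
  move=> x y; rewrite [in LHS](vec_decomp j x) [in LHS](vec_decomp j y).
  rewrite [in RHS](vec_decomp j x) [in RHS](vec_decomp j y) !mulmx_sumr.
  under eq_bigr => k _ do rewrite -scalemxAr HGf.
  under [X in h _ X]eq_bigr => k _ do rewrite -scalemxAr HGf.
  rewrite !h_sum; apply: eq_bigr => k _; apply: eq_bigr => l _.
  by rewrite Hh //; exact: ff_Lj.
move=> i k; rewrite mxE.
have [a Ha] := proj1 (Lj_char j _) (Hmap _ (ff_Lj j k)) i.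
rewrite Ha; rewrite {2}/cc; case: ifP => Hk.
  rewrite divr1 /cc; case: ifP => _.
    by rewrite mulr1; apply: inE_int.
  exact: inE_th.
rewrite /cc; case: ifP => Hi; last first.
  rewrite mulfK ?theta_neq0 //; exact: inE_int.
(* dual lattice argument *)
have Hfi : ff j i = g (g' (ff j i)) by rewrite Hinv //; exact: ff_Lj.
have [b Hb] := proj1 (Lj_char j _) (Hmap' _ (ff_Lj j i)) k.
have E1 := Hh _ _ (ff_Lj j k) (Hmap' _ (ff_Lj j i)).
rewrite -Hfi h_ffr h_ffl Ha Hb /cc Hi Hk conjC1 mulr1 rmorphM /= rmorph_int theta_conj in E1.
have hk : hsign k = 1.
  rewrite /hsign; case: eqP => // Hk0; move: Hk; by rewrite Hk0 subn_gt0 ltnS hj.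
rewrite hk mul1r mulr1 in E1; rewrite mulr1.
have -> : a%:~R = hsign i * (theta * (b%:~R * - theta)) by rewrite -E1 mulrA hsign_sq mul1r.
have -> : hsign i * (theta * (b%:~R * - theta)) / theta = (- hsign i * b%:~R) * theta.
  by field; exact: theta_neq0.
rewrite /hsign; case: ifP => _.
  rewrite opprK mul1r; exact: inE_th.
rewrite mulN1r -rmorphN; exact: inE_th.
Qed.

Lemma mul_ff j (A : 'M[algC]_5) i k : (A *m ff j k) i 0 = A i k * cc j k.
Proof.
rewrite mxE (bigD1 k) //= big1 ?addr0; first by rewrite !mxE eqxx.
by move=> k' /negbTE Hk; rewrite !mxE Hk mulr0.
Qed.

Lemma mx_ff_eq j (A B : 'M[algC]_5) :
  (forall k, A *m ff j k = B *m ff j k) -> A = B.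
Proof.
move=> H; apply/matrixP => i k; have := congr1 (fun M : vec => M i 0) (H k).
rewrite /= !mul_ff; apply: mulIf; exact: cc_neq0.
Qed.

Theorem lemma5p2 (j : nat) (hj : (j <= 4)%N) (g : vec -> vec) :
  isometry_Lambdaj j g ->
  exists G : 'M[algC]_5,
    isometry_Lambda G /\ (forall x, inLambdaj j x -> G *m x = g x).
Proof.
move=> [Hadd Hmap [g' [Hmap' Hinv]] Hh].
have Hadd' x y : inLambdaj j x -> inLambdaj j y -> g' (x + y) = g' x + g' y.
  move=> Hx Hy.
  have -> : x + y = g (g' x + g' y).
    rewrite Hadd; [|exact: Hmap'|exact: Hmap']; by rewrite (proj2 (Hinv x Hx)) (proj2 (Hinv y Hy)).
  apply: (proj1 (Hinv _ _)); apply: Lj_add; exact: Hmap'.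
have Hh' x y : inLambdaj j x -> inLambdaj j y -> h (g' x) (g' y) = h x y.
  move=> Hx Hy; rewrite -Hh; [|exact: Hmap'|exact: Hmap'].
  by rewrite (proj2 (Hinv x Hx)) (proj2 (Hinv y Hy)).
have [G [GE GL Gh]] := construct hj Hadd Hmap Hmap' (fun x Hx => proj2 (Hinv x Hx)) Hh.
have [G' [GE' GL' Gh']] := construct hj Hadd' Hmap' Hmap (fun x Hx => proj1 (Hinv x Hx)) Hh'.
exists G; split => //; split => //.
exists G'; split => //.
  apply: (mx_ff_eq (j := j)) => k; rewrite mul1mx -mulmxA GL'; last exact: ff_Lj.
  rewrite GL; last by apply: Hmap'; exact: ff_Lj.
  by rewrite (proj2 (Hinv _ (ff_Lj j k))).
apply: (mx_ff_eq (j := j)) => k; rewrite mul1mx -mulmxA GL; last exact: ff_Lj.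
rewrite GL'; last by apply: Hmap; exact: ff_Lj.
by rewrite (proj1 (Hinv _ (ff_Lj j k))).
Qed.
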